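(* Let $X=(x_{ij})$ be a $q$-generic $n\times d$ matrix and work in the algebra $K_q\langle x_{ij}\rangle/(\text{$q$-generic relations})$. Let $1\le r\le d$, let $I=(i_1<i_2<\cdots<i_{d+r})$ be an increasing tuple of elements of $[n]$, and let $J=(j_1,\dots,j_{d-r})$ be a tuple of elements of $[n]$. For $1\le s\le d+r$ let $I_{(s)}$ denote $I$ with $i_s$ removed. All subsets of $I$ are listed in increasing order. Then $$\sum_{s=1}^{d+r}(-q)^{2(r-1)-\ell(I_{(s)}|i_{s})}\sum_{\substack{\Lambda'\subseteq I_{(s)}\\ |\Lambda'|=r-1}}(-q)^{-\ell(I_{(s)}\setminus\Lambda'\,|\,\Lambda')}\big[I_{(s)}\setminus\Lambda'\big]\big[\Lambda'|i_{s}|J\big] =\Big(\sum_{t=0}^{r-1}q^{2t}\Big)\sum_{\substack{\Lambda\subseteq I\\ |\Lambda|=r}}(-q)^{-\ell(I\setminus\Lambda|\Lambda)}\big[I\setminus\Lambda\big]\big[\Lambda|J\big].$$ In particular, the Young symmetry expression for $(I,J)$ with parameter $r$ is a $K_q$-linear combination of Young symmetry expressions with parameter $r-1$ (for the pairs $(I_{(s)},(i_s,J))$), up to the scalar factor $\sum_{t=0}^{r-1}q^{2t}$.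
   Context: $K_q$ is a field of characteristic $0$ with a distinguished element $q\neq0$ that is not a root of unity. An $n\times m$ matrix $X=(x_{ij})$ is $q$-generic if its entries satisfy, for all $i<j$ and $k<l$: $x_{kj}x_{ki}=q\,x_{ki}x_{kj}$; $x_{jk}x_{ik}=q\,x_{ik}x_{jk}$; $x_{jk}x_{il}=x_{il}x_{jk}$; $x_{jl}x_{ik}=x_{ik}x_{jl}+(q-q^{-1})x_{il}x_{jk}$. For a square matrix $A=(a_{ij})$ of size $m$, the quantum determinant is $\det_qA=\sum_{\sigma\in S_m}(-q)^{-\ell(\sigma)}a_{1\sigma1}a_{2\sigma2}\cdots a_{m\sigma m}$. For a tuple $K=(k_1,\dots,k_m)$ of elements of $[n]$ (with $m$ at most the number of columns), $[K]$ denotes $\det_q$ of the $m\times m$ matrix whose $t$-th row is $(x_{k_t1},\dots,x_{k_tm})$. For tuples $A,B,\dots$, $A|B$ denotes their concatenation and $[A|B]$ the corresponding quantum minor. For a tuple $(a_1,\dots,a_m)$ of distinct integers, $\ell(a_1,\dots,a_m)$ is its number of inversions, i.e. the number of pairs $u<v$ with $a_u>a_v$ (the minimal number of adjacent swaps needed to sort it). *)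

(* Defs.v *)
From HB Require Import structures.
From mathcomp Require Import all_boot all_order all_algebra all_fingroup.
Set Implicit Arguments. Unset Strict Implicit. Unset Printing Implicit Defensive.
Import GRing.Theory.
Local Open Scope ring_scope.

Definition inv_count (s : seq nat) : nat :=
  (\sum_(u < size s) \sum_(v < size s | (u < v)%N)
      ((nth 0%N s v < nth 0%N s u)%N : nat))%N.

Definition perm_len m (σ : 'S_m) : nat := inv_count [seq val (σ t) | t <- enum 'I_m].

Definition seq_len n (s : seq 'I_n) : nat := inv_count (map val s).

(* the q-generic relations on the entries of an n x d matrix x with entries
   in a K-algebra A (rows indexed by 'I_n, columns by 'I_d, 0-based) *)
Definition qgeneric (K : fieldType) (A : algType K) (n d : nat) (q : K)
    (x : 'I_n -> 'I_d -> A) : Prop :=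
  [/\ (forall (k : 'I_n) (i j : 'I_d), (i < j)%N -> x k j * x k i = q *: (x k i * x k j)),
      (forall (i j : 'I_n) (k : 'I_d), (i < j)%N -> x j k * x i k = q *: (x i k * x j k)),
      (forall (i j : 'I_n) (k l : 'I_d), (i < j)%N -> (k < l)%N ->
          x j k * x i l = x i l * x j k) &
      (forall (i j : 'I_n) (k l : 'I_d), (i < j)%N -> (k < l)%N ->
          x j l * x i k = x i k * x j l + (q - q^-1) *: (x i l * x j k))].

(* entry x_{ij} addressed by natural numbers (0 outside the matrix) *)
Definition xent (K : fieldType) (A : algType K) (n d : nat) (x : 'I_n -> 'I_d -> A)
    (i j : nat) : A :=
  match (insub i : option 'I_n), (insub j : option 'I_d) with
  | Some i', Some j' => x i' j'
  | _, _ => 0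
  end.

(* [K] : quantum determinant of the m x m matrix whose t-th row is
   (x_{k_t 1}, ..., x_{k_t m}), m = size K (used only with m <= d) *)
Definition qminor (K : fieldType) (A : algType K) (n d : nat) (q : K)
    (x : 'I_n -> 'I_d -> A) (s : seq 'I_n) : A :=
  \sum_(σ : 'S_(size s))
     ((- q) ^ (- (perm_len σ)%:Z)) *:
       \prod_(t < size s) xent x (nth 0%N (map val s) t) (σ t).

(* Main.v *)
Require Import Defs.
From HB Require Import structures.
From mathcomp Require Import all_boot all_order all_algebra all_fingroup.
From mathcomp Require Import ring.
From mathcomp Require Import zify.
Import GRing.Theory.
Local Open Scope ring_scope.

Set Implicit Arguments. Unset Strict Implicit. Unset Printing Implicit Defensive.

Section NatPart.
Local Open Scope nat_scope.
Lemma sum_nth_count (P : pred nat) (s : seq nat) :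
  (\sum_(v < size s) (P (nth 0%N s v) : nat))%N = count P s.
Proof.
elim: s => [|y s IH]; first by rewrite big_ord0.
by rewrite /= big_ord_recl /= IH.
Qed.

Lemma inv_cons x s :
  inv_count (x :: s) = (count (fun y => y < x) s + inv_count s)%N.
Proof.
rewrite /inv_count /= big_ord_recl /=.
congr (_ + _).
  rewrite big_mkcond big_ord_recl /= add0n -sum_nth_count.
  by apply: eq_bigr => v _.
apply: eq_bigr => u _; rewrite big_mkcond big_ord_recl /= add0n.
rewrite [RHS]big_mkcond; apply: eq_bigr => v _.
by rewrite /bump /= add1n ltnS.
Qed.

Lemma inv_insert X a Y :
  inv_count (X ++ a :: Y) =
  (inv_count (X ++ Y) + count (fun x => a < x) X + count (fun y => y < a) Y)%N.
Proof.
elim: X => [|x X IH] /=; first by rewrite inv_cons addn0 addnC.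
rewrite !inv_cons IH !count_cat /=.
case: (ltnP a x) => h /=; lia.
Qed.

Lemma inv_sorted s : sorted ltn s -> inv_count s = 0%N.
Proof.
elim: s => [|x s IH] /=; first by rewrite /inv_count big_ord0.
move=> hp; rewrite inv_cons IH ?(path_sorted hp) //.
have: all (fun y => x < y) s.
  by have := order_path_min ltn_trans hp.
rewrite addn0 => /allP al; apply/eqP; rewrite -leqn0 leqNgt -has_count.
apply/hasP => -[y /al hy hl]; lia.
Qed.

Lemma inv_swap X a b Y : a < b ->
  inv_count (X ++ b :: a :: Y) = (inv_count (X ++ a :: b :: Y)).+1.
Proof.
move=> ab.
have -> : X ++ a :: b :: Y = (X ++ [:: a]) ++ b :: Y by rewrite -catA.
rewrite inv_insert [in RHS]inv_insert -catA /= count_cat /=.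
rewrite ab ltnNge (ltnW ab) /=; lia.
Qed.

End NatPart.

Lemma prod_split (R : ringType) m (F : 'I_m.+1 -> R) u : (u.+1 < m.+1)%N ->
  \prod_(t < m.+1) F t = (\prod_(0 <= t < u) F (inord t)) *
     (F (inord u) * F (inord u.+1)) * \prod_(u.+2 <= t < m.+1) F (inord t).
Proof.
move=> hu; rewrite big_mknat (@big_cat_nat _ _ _ u) //=; last by lia.
rewrite [X in _ * X = _]big_ltn; last by lia.
rewrite [X in _ * (_ * X) = _]big_ltn; last by lia.
by rewrite !mulrA.
Qed.

Lemma perm_list m (s : 'S_m.+1) :
  [seq val (s t) | t <- enum 'I_m.+1] = map (fun i => val (s (inord i))) (iota 0 m.+1).
Proof.
rewrite -val_enum_ord -map_comp; apply: eq_map => t /=; by rewrite inord_val.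
Qed.

Lemma perm_len_swap m (s : 'S_m.+1) u : (u.+1 < m.+1)%N ->
  (val (s (inord u)) < val (s (inord u.+1)))%N ->
  perm_len (tperm (inord u) (inord u.+1) * s) = (perm_len s).+1.
Proof.
move=> hu hs; rewrite /perm_len !perm_list.
have -> : iota 0 m.+1 = iota 0 u ++ u :: u.+1 :: iota u.+2 (m.+1 - u.+2).
  have E : (u + (m.+1 - u.+2).+2 = m.+1)%N by lia.
  by rewrite -[in LHS]E iotaD.
have neq : forall i j, (i <= m)%N -> (j <= m)%N -> i != j -> (inord i : 'I_m.+1) != inord j.
  move=> i j hi hj; apply: contra => /eqP /(congr1 val) /=; rewrite !inordK //.
  by move=> ->.
rewrite !map_cat /= !permM tpermL tpermR.
have e1 : {in iota 0 u, (fun i => val ((tperm (inord u) (inord u.+1) * s)%g (inord i))) =1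
            (fun i => val (s (inord i)))}.
  move=> i; rewrite mem_iota => /andP[_ hi]; rewrite /= permM tpermD //; rewrite eq_sym; apply: neq; lia.
have e2 : {in iota u.+2 (m.+1 - u.+2), (fun i => val ((tperm (inord u) (inord u.+1) * s)%g (inord i))) =1
            (fun i => val (s (inord i)))}.
  move=> i; rewrite mem_iota => /andP[h1 h2]; rewrite /= permM tpermD //; rewrite eq_sym; apply: neq; lia.
move/eq_in_map: e1 => ->; move/eq_in_map: e2 => ->.
by rewrite inv_swap.
Qed.

Section Swap.
Variables (K : fieldType) (q : K) (A : algType K) (n d : nat) (x : 'I_n -> 'I_d -> A).
Hypothesis q0 : q != 0.
Hypothesis R3 : forall a c k l, (a < c)%N -> (k < l)%N ->
  xent x c k * xent x a l = xent x a l * xent x c k.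
Hypothesis R4 : forall a c k l, (a < c)%N -> (k < l)%N ->
  xent x c l * xent x a k = xent x a k * xent x c l + (q - q^-1) *: (xent x a l * xent x c k).

Definition Dm m (row : nat -> nat) : A :=
  \sum_(s : 'S_m) ((- q) ^ (- (perm_len s)%:Z)) *: \prod_(t < m) xent x (row t) (s t).

Lemma expS k : (- q) ^ (- (k.+1)%:Z) = (- q) ^ (- k%:Z) * (- q)^-1.
Proof.
have -> : (- (k.+1)%:Z) = - k%:Z + (-1) by rewrite -addn1 PoszD opprD.
by rewrite expfzDr ?oppr_eq0 // exprN1.
Qed.

Lemma Dm_split m row u : (u.+1 < m.+1)%N ->
  Dm m.+1 row = \sum_(s : 'S_m.+1 | (val (s (inord u)) < val (s (inord u.+1)))%N)
     (((- q) ^ (- (perm_len s)%:Z)) *: \prod_(t < m.+1) xent x (row t) (s t) +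
      ((- q) ^ (- (perm_len (tperm (inord u) (inord u.+1) * s)%g)%:Z)) *: \prod_(t < m.+1) xent x (row t) ((tperm (inord u) (inord u.+1) * s)%g t)).
Proof.
move=> hu; set tau : 'S_m.+1 := tperm (inord u) (inord u.+1); rewrite /Dm (bigID (fun s : 'S_m.+1 => (val (s (inord u)) < val (s (inord u.+1)))%N)) /=.
rewrite big_split /=; congr (_ + _).
rewrite (reindex_inj (mulgI tau)) /=; apply: eq_bigl => s.
rewrite !permM /tau tpermL tpermR -leqNgt leq_eqVlt.
case: eqP => //= /val_inj /perm_inj /(congr1 val) /=; rewrite !inordK; lia.
Qed.

Lemma prod_form m u (row0 : nat -> nat) (s0 : 'S_m.+1) : (u.+1 < m.+1)%N ->
  \prod_(t < m.+1) xent x (row0 t) (s0 t) =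
  (\prod_(0 <= t < u) xent x (row0 t) (s0 (inord t))) *
  (xent x (row0 u) (s0 (inord u)) * xent x (row0 u.+1) (s0 (inord u.+1))) *
  \prod_(u.+2 <= t < m.+1) xent x (row0 t) (s0 (inord t)).
Proof.
move=> hu; rewrite (prod_split _ hu) !inordK; try lia.
congr (_ * _ * _); apply: eq_big_nat => t ht; rewrite inordK //; lia.
Qed.

Lemma Dm_swap m row u : (u.+1 < m)%N -> (row u.+1 < row u)%N ->
  Dm m row = (- q)^-1 *: Dm m (fun t => if t == u then row u.+1 else if t == u.+1 then row u else row t).
Proof.
case: m => [|m] //; move=> hu hr.
rewrite !(Dm_split _ hu) scaler_sumr; apply: eq_bigr => s hs.
set tau : 'S_m.+1 := tperm (inord u) (inord u.+1).
set row' := (fun t => if t == u then row u.+1 else if t == u.+1 then row u else row t).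
rewrite perm_len_swap // expS.
set c0 := (- q) ^ (- (perm_len s)%:Z).
set a := row u.+1; set c := row u.
set k := val (s (inord u)); set l := val (s (inord u.+1)).
set Pr := \prod_(0 <= t < u) xent x (row t) (s (inord t)).
set Po := \prod_(u.+2 <= t < m.+1) xent x (row t) (s (inord t)).
have neq : forall i j, (i <= m)%N -> (j <= m)%N -> i != j -> (inord i : 'I_m.+1) != inord j.
  move=> i j hi hj; apply: contra => /eqP /(congr1 val) /=; rewrite !inordK //.
  by move=> ->.
have tauE : forall t, (t <= m)%N -> t != u -> t != u.+1 -> (tau * s)%g (inord t) = s (inord t).
  move=> t ht h1 h2; rewrite permM /tau tpermD // eq_sym; apply: neq => //; lia.
have h1 : \prod_(t < m.+1) xent x (row t) (s t) = Pr * (xent x c k * xent x a l) * Po.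
  by rewrite (prod_form _ _ hu).
have h2 : \prod_(t < m.+1) xent x (row t) ((tau * s)%g t) = Pr * (xent x c l * xent x a k) * Po.
  rewrite (prod_form _ _ hu) !permM /tau tpermL tpermR.
  congr (_ * _ * _); apply: eq_big_nat => t ht; (rewrite -/tau tauE //; [lia|apply/eqP; lia|apply/eqP; lia]).
have h3 : \prod_(t < m.+1) xent x (row' t) (s t) = Pr * (xent x a k * xent x c l) * Po.
  rewrite (prod_form _ _ hu) /row' eqxx (_ : (u.+1 == u) = false) ?eqxx; last by lia.
  congr (_ * _ * _); apply: eq_big_nat => t ht.
    have [-> ->] : (t == u) = false /\ (t == u.+1) = false by split; apply/eqP; lia.
    by [].
  have [-> ->] : (t == u) = false /\ (t == u.+1) = false by split; apply/eqP; lia.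
  by [].
have h4 : \prod_(t < m.+1) xent x (row' t) ((tau * s)%g t) = Pr * (xent x a l * xent x c k) * Po.
  rewrite (prod_form _ _ hu) !permM /tau tpermL tpermR /row' eqxx (_ : (u.+1 == u) = false) ?eqxx; last by lia.
  congr (_ * _ * _); apply: eq_big_nat => t ht.
    have [-> ->] : (t == u) = false /\ (t == u.+1) = false by split; apply/eqP; lia.
    by rewrite -/tau tauE //; apply/eqP; lia.
  have [-> ->] : (t == u) = false /\ (t == u.+1) = false by split; apply/eqP; lia.
  by rewrite -/tau tauE //; apply/eqP; lia.
rewrite h1 h2 h3 h4.
have ac : (a < c)%N by [].
have kl : (k < l)%N by [].
rewrite (R3 ac kl) (R4 ac kl).
set B := xent x a l * xent x c k; set C := xent x a k * xent x c l.
rewrite mulrDr mulrDl -scalerAr -scalerAl.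
rewrite !scalerDr !scalerA.
have e1 : c0 + c0 * (- q)^-1 * (q - q^-1) = (- q)^-1 * (c0 * (- q)^-1).
  by field; rewrite oppr_eq0 q0.
by rewrite -e1 scalerDl (mulrC (-q)^-1 c0) addrCA.
Qed.

Lemma Dm_ext m r1 r2 : (forall t, r1 t = r2 t) -> Dm m r1 = Dm m r2.
Proof. by move=> h; apply: eq_bigr => s _; under eq_bigr do rewrite h. Qed.

Lemma qminor_swap (P : seq 'I_n) (c a : 'I_n) T : (val a < val c)%N ->
  qminor q x (P ++ c :: a :: T) = (- q)^-1 *: qminor q x (P ++ a :: c :: T).
Proof.
move=> ac.
change (Dm (size (P ++ c :: a :: T)) (fun t => nth 0%N (map val (P ++ c :: a :: T)) t) =
  (- q)^-1 *: Dm (size (P ++ a :: c :: T)) (fun t => nth 0%N (map val (P ++ a :: c :: T)) t)).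
rewrite !size_cat /=.
rewrite (@Dm_swap _ _ (size P)); last first.
- by rewrite !map_cat !nth_cat size_map ltnn (ltnNge (size P).+1) leqnSn subSnn subnn /=.
- lia.
congr (_ *: _); apply: Dm_ext => t.
rewrite !map_cat !nth_cat size_map.
case: (ltngtP t (size P)) => h.
- by rewrite (_ : (t == (size P).+1) = false) //; apply/eqP; lia.
- case: eqP => [ht|ht].
    by rewrite ht ltnn subnn subSnn.
  have : (1 < t - size P)%N by lia.
  by case: (t - size P)%N => [|[|k]].
- by rewrite -h subnn (ltnNge t.+1) leqnSn /= subSnn.
Qed.

Lemma qminor_move (M : seq 'I_n) (i : 'I_n) J : forall P,
  (forall c, c \in M -> (val i < val c)%N) ->
  qminor q x (P ++ M ++ i :: J) = (- q) ^ (- (size M)%:Z) *: qminor q x (P ++ i :: M ++ J).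
Proof.
elim: M => [|c M IH] P hM /=; first by rewrite scale1r.
rewrite -cat_rcons IH; last by move=> c' hc; apply: hM; rewrite inE hc orbT.
rewrite cat_rcons qminor_swap; last by apply: hM; rewrite inE eqxx.
by rewrite scalerA expS.
Qed.

End Swap.

Section Comb.
Variables (K : fieldType) (q : K) (A : algType K) (n d : nat) (x : 'I_n -> 'I_d -> A).
Variables (r : nat) (J : seq 'I_n).
Hypothesis q0 : q != 0.
Hypothesis R3 : forall a c k l, (a < c)%N -> (k < l)%N ->
  xent x c k * xent x a l = xent x a l * xent x c k.
Hypothesis R4 : forall a c k l, (a < c)%N -> (k < l)%N ->
  xent x c l * xent x a k = xent x a k * xent x c l + (q - q^-1) *: (xent x a l * xent x c k).

Definition ltI (a b : 'I_n) := (val a < val b)%N.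

Definition Tm (I : seq 'I_n) (L : {set 'I_n}) : A :=
  (- q) ^ (- (seq_len ([seq b <- I | b \notin L] ++ [seq b <- I | b \in L]))%:Z) *:
    (qminor q x [seq b <- I | b \notin L] * qminor q x ([seq b <- I | b \in L] ++ J)).

Lemma per_term I1 a I2 (L : {set 'I_n}) :
  all (fun b : 'I_n => val b < val a)%N I1 -> all (fun b : 'I_n => val a < val b)%N I2 ->
  sorted ltI (I1 ++ I2) ->
  (- q) ^ ((2 * (r - 1))%N%:Z - (seq_len ([seq b <- I1 ++ a :: I2 | b != a] ++ [:: a]))%:Z) *:
   ((- q) ^ (- (seq_len ([seq b <- [seq b <- I1 ++ a :: I2 | b != a] | b \notin L] ++
                         [seq b <- [seq b <- I1 ++ a :: I2 | b != a] | b \in L]))%:Z) *: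
    (qminor q x [seq b <- [seq b <- I1 ++ a :: I2 | b != a] | b \notin L] *
     qminor q x ([seq b <- [seq b <- I1 ++ a :: I2 | b != a] | b \in L] ++ a :: J)))
  = (- q) ^ ((2 * (r - 1))%N%:Z -
       (2 * count (fun b : 'I_n => (b \in a |: L) && (val a < val b))%N (I1 ++ a :: I2))%N%:Z) *:
    Tm (I1 ++ a :: I2) (a |: L).
Proof.
move=> h1 h2 hs.
have n1 : {in I1, forall b, (b != a)}.
  move=> b /(allP h1) hb; apply/eqP => e; by rewrite e ltnn in hb.
have n2 : {in I2, forall b, (b != a)}.
  move=> b /(allP h2) hb; apply/eqP => e; by rewrite e ltnn in hb.
have Is_eq : [seq b <- I1 ++ a :: I2 | b != a] = I1 ++ I2.
  rewrite filter_cat /= eqxx /=; congr (_ ++ _); apply/all_filterP/allP; [exact: n1|exact: n2].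
set N1 := [seq b <- I1 | b \notin L]; set N2 := [seq b <- I2 | b \notin L].
set L1 := [seq b <- I1 | b \in L]; set L2 := [seq b <- I2 | b \in L].
have f1 : [seq b <- I1 ++ I2 | b \notin L] = N1 ++ N2 by rewrite filter_cat.
have f2 : [seq b <- I1 ++ I2 | b \in L] = L1 ++ L2 by rewrite filter_cat.
have f3 : [seq b <- I1 ++ a :: I2 | b \notin a |: L] = N1 ++ N2.
  rewrite filter_cat /= in_setU1 eqxx /=; congr (_ ++ _); apply: eq_in_filter => b hb;
    rewrite in_setU1 ?(negbTE (n1 _ hb)) ?(negbTE (n2 _ hb)) //.
have f4 : [seq b <- I1 ++ a :: I2 | b \in a |: L] = L1 ++ a :: L2.
  rewrite filter_cat /= in_setU1 eqxx /=; congr (_ ++ _ :: _); apply: eq_in_filter => b hb;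
    rewrite in_setU1 ?(negbTE (n1 _ hb)) ?(negbTE (n2 _ hb)) //.
have cnt : count (fun b : 'I_n => (b \in a |: L) && (val a < val b))%N (I1 ++ a :: I2) = size L2.
  rewrite count_cat /= ltnn andbF add0n.
  rewrite (eq_in_count (a2 := pred0)); last first.
    by move=> b /(allP h1) hb /=; rewrite ltnNge (ltnW hb) andbF.
  rewrite count_pred0 add0n size_filter; apply: eq_in_count => b hb /=.
  by rewrite in_setU1 (negbTE (n2 _ hb)) (allP h2 _ hb) andbT.
have sI2 : size I2 = (size N2 + size L2)%N.
  rewrite !size_filter addnC -(count_predC (fun b => b \in L) I2); congr (_ + _)%N.
have cA : forall X, count (fun y => val a < y)%N (map val X) = count (fun b : 'I_n => val a < val b)%N X.
  by move=> X; rewrite count_map.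
have c1 : forall p, count (fun b : 'I_n => val a < val b)%N [seq b <- I1 | p b] = 0%N.
  move=> p; apply/eqP; rewrite -leqn0 leqNgt -has_count; apply/hasP => -[b].
  rewrite mem_filter => /andP[_ /(allP h1) hb] hab; lia.
have c2 : forall p, count (fun b : 'I_n => val a < val b)%N [seq b <- I2 | p b] = size [seq b <- I2 | p b].
  move=> p; apply/eqP; rewrite -all_count; apply/allP => b.
  by rewrite mem_filter => /andP[_ /(allP h2)].
have sl1 : seq_len ([seq b <- I1 ++ a :: I2 | b != a] ++ [:: a]) = (size N2 + size L2)%N.
  rewrite Is_eq /seq_len map_cat /= inv_insert inv_sorted; last by rewrite cats0 sorted_map.
  rewrite cA count_cat.
  have -> : count (fun b : 'I_n => val a < val b)%N I1 = 0%N by have := c1 predT; rewrite filter_predT.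
  have -> : count (fun b : 'I_n => val a < val b)%N I2 = size I2 by have := c2 predT; rewrite filter_predT.
  by rewrite sI2 /= !add0n addn0.
have sl2 : seq_len ((N1 ++ N2) ++ (L1 ++ a :: L2)) = (seq_len ((N1 ++ N2) ++ (L1 ++ L2)) + size N2)%N.
  rewrite /seq_len !catA !map_cat /= inv_insert -addnA; congr (_ + _)%N.
  rewrite -!map_cat cA !count_cat c1 c2 c1 add0n addn0.
  apply/eqP; rewrite eqn_leq leq_addr /= -{2}(addn0 (size N2)) leq_add2l leqn0.
  rewrite count_map andbT -leqn0 leqNgt -has_count; apply/hasP => -[b].
  rewrite mem_filter => /andP[_ /(allP h2) hb] /= hab; rewrite ltnNge (ltnW hb) in hab; done.
have qm : qminor q x ((L1 ++ L2) ++ a :: J) =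
          (- q) ^ (- (size L2)%:Z) *: qminor q x ((L1 ++ a :: L2) ++ J).
  rewrite -catA qminor_move //; first by rewrite -catA.
  by move=> c; rewrite mem_filter => /andP[_ /(allP h2)].
rewrite sl1 /Tm cnt f3 f4 sl2 Is_eq f1 f2 qm.
rewrite -scalerAr !scalerA -!expfzDr ?oppr_eq0 //; congr (_ ^ _ *: _).
lia.
Qed.

Lemma wsum (f : nat -> K) (l : seq 'I_n) : sorted ltI l ->
  \sum_(a <- l) f (count (fun b : 'I_n => val a < val b)%N l) = \sum_(t < size l) f t.
Proof.
elim: l f => [|a0 l IH] f /=; first by rewrite big_nil big_ord0.
move=> hp; have al : all (ltI a0) l by apply: order_path_min hp; exact: ltn_trans.
rewrite big_cons big_ord_recr /= addrC; congr (_ + _).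
  rewrite ltnn add0n; congr (f _); apply/eqP; rewrite -all_count; exact: al.
rewrite -(IH f (path_sorted hp)); apply: eq_big_seq => b hb.
by rewrite ltnNge (ltnW (allP al _ hb)) add0n.
Qed.

Lemma reidx (I : seq 'I_n) a (F : {set 'I_n} -> A) : a \in I -> (0 < r)%N ->
  \sum_(L : {set 'I_n} | (L \subset [set b in [seq b <- I | b != a]]) && (#|L| == r.-1)) F (a |: L) =
  \sum_(L : {set 'I_n} | (L \subset [set b in I]) && (#|L| == r) && (a \in L)) F L.
Proof.
move=> aI r0.
rewrite [RHS](reindex_onto (fun L => a |: L) (fun L => L :\ a)); last first.
  by move=> L /andP[_ aL]; rewrite setD1K.
apply: eq_bigl => L.
case aL: (a \in L).
  have -> : ((L \subset [set b in [seq b <- I | b != a]]) && (#|L| == r.-1)) = false.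
    apply: negbTE; apply/negP => /andP[/subsetP/(_ a aL)]; by rewrite inE mem_filter eqxx.
  symmetry; apply: negbTE; apply/negP => /andP[_ /eqP e]; by have := aL; rewrite -e in_setD1 eqxx.
rewrite setU1K ?aL // eqxx setU11 !andbT cardsU1 aL add1n subUset sub1set inE aI /=.
have -> : (L \subset [set b in [seq b <- I | b != a]]) = (L \subset [set b in I]).
  apply/subsetP/subsetP => h b hb; have := h b hb; rewrite !inE ?mem_filter //.
    by case/andP.
  by move=> ->; rewrite andbT; apply: contraFN aL => /eqP <-.
congr (_ && _); case: r r0 => // r' _; by rewrite eqSS.
Qed.

End Comb.

Lemma xent0r (K : fieldType) (A : algType K) n d (x : 'I_n -> 'I_d -> A) i j :
  (n <= i)%N -> xent x i j = 0.
Proof. by move=> h; rewrite /xent insubF // ltnNge h. Qed.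

Lemma xent0c (K : fieldType) (A : algType K) n d (x : 'I_n -> 'I_d -> A) i j :
  (d <= j)%N -> xent x i j = 0.
Proof. by move=> h; rewrite /xent; case: insub => // ?; rewrite insubF // ltnNge h. Qed.

Lemma xentE (K : fieldType) (A : algType K) n d (x : 'I_n -> 'I_d -> A) i j
  (hi : (i < n)%N) (hj : (j < d)%N) : xent x i j = x (Ordinal hi) (Ordinal hj).
Proof. by rewrite /xent (insubT (fun i => i < n)%N hi) (insubT (fun j => j < d)%N hj). Qed.

Lemma split_mem (T : eqType) (s : seq T) a : a \in s -> exists I1 I2, s = I1 ++ a :: I2.
Proof. by case/splitPr => I1 I2; exists I1, I2. Qed.

Lemma rels (K : fieldType) (q : K) (A : algType K) n d (x : 'I_n -> 'I_d -> A) :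
  qgeneric q x ->
  (forall a c k l, (a < c)%N -> (k < l)%N ->
     xent x c k * xent x a l = xent x a l * xent x c k) /\
  (forall a c k l, (a < c)%N -> (k < l)%N ->
     xent x c l * xent x a k = xent x a k * xent x c l + (q - q^-1) *: (xent x a l * xent x c k)).
Proof.
case=> _ _ g3 g4; split=> a c k l ac kl.
- case: (ltnP c n) => hc; last by rewrite !(xent0r _ _ hc) mul0r mulr0.
  case: (ltnP l d) => hl; last by rewrite !(xent0c _ _ hl) mul0r mulr0.
  have ha : (a < n)%N by lia.
  have hk : (k < d)%N by lia.
  rewrite !xentE; exact: (g3 (Ordinal ha) (Ordinal hc) (Ordinal hk) (Ordinal hl)).
- case: (ltnP c n) => hc; first last.
    by rewrite !(xent0r _ _ hc) mul0r !mulr0 scaler0 addr0.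
  case: (ltnP l d) => hl; first last.
    by rewrite !(xent0c _ _ hl) mul0r mulr0 mul0r scaler0 addr0.
  have ha : (a < n)%N by lia.
  have hk : (k < d)%N by lia.
  rewrite !xentE; exact: (g4 (Ordinal ha) (Ordinal hc) (Ordinal hk) (Ordinal hl)).
Qed.

Unset Implicit Arguments.

Theorem mainTheorem1 (K : fieldType) (q : K) (A : algType K) (n d r : nat)
    (x : 'I_n -> 'I_d -> A) (I : (d + r).-tuple 'I_n) (J : seq 'I_n) :
  [pchar K] =i pred0 ->
  q != 0 ->
  (forall k : nat, (0 < k)%N -> q ^+ k != 1) ->
  qgeneric q x ->
  (1 <= r <= d)%N ->
  sorted (fun a b : 'I_n => (val a < val b)%N) I ->
  size J = (d - r)%N ->
  \sum_(s < d + r)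
     (let i_s := tnth I s in
      let Is := [seq a <- I | a != i_s] in
      (- q) ^ ((2 * (r - 1))%N%:Z - (seq_len (Is ++ [:: i_s]))%:Z) *:
      \sum_(L : {set 'I_n} | (L \subset [set a in Is]) && (#|L| == r.-1))
         ((- q) ^ (- (seq_len ([seq a <- Is | a \notin L] ++ [seq a <- Is | a \in L]))%:Z) *:
          (qminor q x [seq a <- Is | a \notin L] *
           qminor q x ([seq a <- Is | a \in L] ++ i_s :: J))))
  = (\sum_(t < r) q ^+ (2 * t)) *:
      \sum_(L : {set 'I_n} | (L \subset [set a in (I : seq 'I_n)]) && (#|L| == r))
         ((- q) ^ (- (seq_len ([seq a <- I | a \notin L] ++ [seq a <- I | a \in L]))%:Z) *:
          (qminor q x [seq a <- I | a \notin L] *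
           qminor q x ([seq a <- I | a \in L] ++ J))).
Proof.
move=> _ q0 _ hg /andP[r1 rd] hs hJ.
have [R3 R4] := rels hg.
have trI : transitive (fun a b : 'I_n => (val a < val b)%N).
  by move=> b a c; apply: ltn_trans.
have uI : uniq (I : seq 'I_n).
  by apply: (sorted_uniq trI) hs => a; rewrite /= ltnn.
pose G (a : 'I_n) (L : {set 'I_n}) :=
  (- q) ^ ((2 * (r - 1))%N%:Z -
       (2 * count (fun b : 'I_n => (b \in L) && (val a < val b))%N (I : seq 'I_n))%N%:Z) *:
    Tm q x J I L.
rewrite (_ : \sum_(s < d + r) _ = \sum_(a <- (I : seq 'I_n))
   \sum_(L : {set 'I_n} | (L \subset [set b in (I : seq 'I_n)]) && (#|L| == r) && (a \in L)) G a L).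
  rewrite (eq_bigr (fun a => \sum_(L : {set 'I_n} | (L \subset [set b in (I : seq 'I_n)]) && (#|L| == r))
                        (if a \in L then G a L else 0))); last by move=> a _; rewrite big_mkcondr.
  rewrite exchange_big scaler_sumr; apply: eq_bigr => L /andP[LI /eqP cL].
  rewrite -big_mkcond /G -scaler_suml; congr (_ *: _).
  rewrite -big_filter.
  rewrite (eq_bigr (fun a => (- q) ^ ((2 * (r - 1))%N%:Z - (2 * count (fun b : 'I_n => (val a < val b))%N
                   [seq b <- (I : seq 'I_n) | b \in L])%N%:Z))); last first.
    by move=> a _; rewrite count_filter; congr (_ ^ (_ - (2 * _)%N%:Z)); apply: eq_count => b /=; rewrite andbC.
  rewrite (wsum (fun t => (- q) ^ ((2 * (r - 1))%N%:Z - (2 * t)%N%:Z))); last by apply: sorted_filter.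
  have -> : size [seq b <- (I : seq 'I_n) | b \in L] = r.
    apply: (etrans _ cL); apply/esym; rewrite -(card_uniqP (filter_uniq _ uI)).
    apply: eq_card => b; rewrite mem_filter andb_idr //.
    by move/(subsetP LI); rewrite inE.
  rewrite (reindex_inj rev_ord_inj) /=; apply: eq_bigr => t _.
  have ht := ltn_ord t.
  have -> : ((2 * (r - 1))%N%:Z - (2 * (r - t.+1))%N%:Z) = (2 * t)%N%:Z by lia.
  by rewrite -exprnP !exprM sqrrN.
rewrite big_tuple; apply: eq_bigr => s _ /=.
set a := tnth I s.
have aI : a \in (I : seq 'I_n) by apply: mem_tnth.
rewrite -(reidx (G a) aI r1) scaler_sumr; apply: eq_bigr => L _.
have [I1 [I2 eI]] := split_mem aI.
rewrite /G eI.
have := hs; rewrite eI (sorted_pairwise trI) pairwise_cat pairwise_cons allrel_consr.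
case/and3P => /andP[al1 _] _ /andP[al2 _].
apply: (per_term _ _ q0 R3 R4) => //.
rewrite /ltI.
have sub : subseq (I1 ++ I2) (I1 ++ a :: I2).
  by apply: cat_subseq (subseq_refl _) (subseq_cons _ _).
by apply: (subseq_sorted trI sub); rewrite -eI.
Qed.
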